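(* Let $\mathbf v=(v_1,\dots,v_m)$ and $\mathbf k=(k_1,\dots,k_m)$ be $m$-tuples of positive integers with $\mathbf v\ge\mathbf k$ and $\sum_i k_i\ge2$, and $\mathbf w=(w_1,\dots,w_n)$ and $\boldsymbol\ell=(\ell_1,\dots,\ell_n)$ be $n$-tuples of positive integers with $\mathbf w\ge\boldsymbol\ell$ and $\sum_i\ell_i\ge2$. Then \[ C(\mathrm{cat}(\mathbf v,\mathbf w),\mathrm{cat}(\mathbf k,\boldsymbol\ell),2)\ \le\ \max\{C(\mathbf v,\mathbf k,2),C(\mathbf w,\boldsymbol\ell,2)\}+\left(\max_{i=1,\dots,m}\left\lceil\frac{v_i}{k_i}\right\rceil\right)\left(\max_{i=1,\dots,n}\left\lceil\frac{w_i}{\ell_i}\right\rceil\right). \]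
   Context: $\mathrm{cat}(\mathbf a,\mathbf b)$ denotes concatenation of tuples. For tuples $\mathbf a,\mathbf b$ of positive integers of the same length $p$ with $\mathbf b\le\mathbf a$ entrywise: let $Y_1,\dots,Y_p$ be pairwise disjoint sets with $|Y_i|=a_i$; a block is a $p$-tuple $(B_1,\dots,B_p)$ with $B_i\subseteq Y_i$, $|B_i|=b_i$; a $p$-tuple of sets $(T_1,\dots,T_p)$ is $(\mathbf a,\mathbf b,2)$-admissible if $T_i\subseteq Y_i$, $|T_i|\le b_i$ and $\sum|T_i|=2$, and is contained in a block if $T_i\subseteq B_i$ for all $i$. A ${\rm GC}(\mathbf a,\mathbf b,2)$ is a finite family (repetitions allowed) of blocks containing every admissible tuple in at least one block; $C(\mathbf a,\mathbf b,2)$ is the minimum number of blocks. *)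

(* Defs.v *)
From mathcomp Require Import all_boot.
From Stdlib Require Import ClassicalEpsilon.

(* A p-tuple a of positive integers is represented as a sequence a : seq nat
   with p = size a.  The disjoint ground sets Y_1, ..., Y_p with |Y_i| = a_i
   are realised as the fibres of the disjoint union
   Pt a = { i : 'I_p & 'I_(a_i) }.  A p-tuple of sets (T_1,...,T_p) with
   T_i \subseteq Y_i is identified with the subset T = \bigcup T_i of Pt a,
   T_i being its fibre over i. *)
Definition Pt (a : seq nat) : finType := {i : 'I_(size a) & 'I_(nth 0 a i)}.

Definition part (a : seq nat) (i : 'I_(size a)) (S : {set Pt a}) : {set Pt a} :=
  [set x in S | tag x == i].

Definition is_block (a b : seq nat) (B : {set Pt a}) : bool :=
  [forall i : 'I_(size a), #|part a i B| == nth 0 b i].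

Definition admissible (a b : seq nat) (T : {set Pt a}) : bool :=
  [forall i : 'I_(size a), #|part a i T| <= nth 0 b i] && (#|T| == 2).

Definition is_GC (a b : seq nat) (F : seq {set Pt a}) : bool :=
  all (is_block a b) F &&
  [forall T : {set Pt a}, admissible a b T ==> has (fun B : {set Pt a} => T \subset B) F].

Definition has_GC_of_size (a b : seq nat) (n : nat) : Prop :=
  exists F : seq {set Pt a}, size F = n /\ is_GC a b F.

Definition hasGCb (a b : seq nat) (n : nat) : bool :=
  if excluded_middle_informative (has_GC_of_size a b n) then true else false.

(* C(a,b,2): the minimum number of blocks in a GC(a,b,2)
   (set to 0 if no GC exists, which never happens when b <= a). *)
Definition C2 (a b : seq nat) : nat :=
  match excluded_middle_informative (exists n, hasGCb a b n) with
  | left P => ex_minn P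
  | right _ => 0
  end.

Definition ceildiv (x y : nat) : nat := (x + y).-1 %/ y.

(* Main.v *)
Require Import Defs.
From mathcomp Require Import all_boot zify.
From Stdlib Require Import ClassicalEpsilon.

Lemma cnt N (g : nat -> bool) : #|[set j : 'I_N | g j]| = count g (iota 0 N).
Proof. rewrite cardsE cardE /enum_mem size_filter -enumT -val_enum_ord count_map. by apply: eq_count => j; rewrite !inE. Qed.

Definition code a (x : Pt a) : nat * nat := (nat_of_ord (tag x), nat_of_ord (tagged x)).
Arguments code {a} x.
Lemma code_inj a : injective (@code a).
Proof.
move=> [i1 j1] [i2 j2] /= [e1 e2].
have ei : i1 = i2 by apply: val_inj. subst i2.
have ej : j1 = j2 by apply: val_inj. by subst.
Qed.

Definition mkPt a i j (Hi : i < size a) (Hj : j < nth 0 a i) : Pt a :=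
  @Tagged 'I_(size a) (Ordinal Hi) (fun i => 'I_(nth 0 a i)) (Ordinal Hj).

Arguments mkPt {a i j} Hi Hj.
Lemma inpart a i S (x : Pt a) : (x \in part a i S) = (x \in S) && (tag x == i).
Proof. by rewrite inE. Qed.

Lemma card_part_fun a (f : nat -> nat -> bool) (i : 'I_(size a)) :
  #|part a i [set x : Pt a | f (tag x) (tagged x)]| = count (f i) (iota 0 (nth 0 a i)).
Proof.
rewrite -cnt.
have -> : part a i [set x : Pt a | f (tag x) (tagged x)] =
   (fun j : 'I_(nth 0 a i) => @Tagged 'I_(size a) i (fun i => 'I_(nth 0 a i)) j : Pt a)
     @: [set j : 'I_(nth 0 a i) | f i j].
  apply/setP => -[i0 j0]; rewrite inpart !inE /=.
  case: eqP => [e|ne].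
    subst i0; rewrite andbT. apply/idP/imsetP => [H|[j' Hj' e]].
      by exists j0 => //; rewrite inE.
    have := congr1 (@code a) e; rewrite /code /= => -[ej].
    have ej' : j0 = j' by apply: val_inj.
    by subst; move: Hj'; rewrite inE.
  rewrite andbF; apply/esym/negbTE/imsetP => -[j' _ e].
  by apply: ne; have := congr1 (@tag _ _) e.
rewrite card_imset //.
move=> j1 j2 e; apply: val_inj. by have := congr1 (@code a) e; rewrite /code /= => -[].
Qed.
Lemma code1lt a (x : Pt a) : (code x).1 < size a.
Proof. exact: ltn_ord. Qed.
Lemma code2lt a (x : Pt a) : (code x).2 < nth 0 a (code x).1.
Proof. exact: ltn_ord. Qed.
Arguments code1lt {a} x.
Arguments code2lt {a} x.

Lemma ltL v w (x : Pt v) : nat_of_ord (tag x) < size (v ++ w).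
Proof. rewrite size_cat; have := ltn_ord (tag x); lia. Qed.
Arguments ltL {v} w x.
Lemma ltL2 v w (x : Pt v) : nat_of_ord (tagged x) < nth 0 (v ++ w) (nat_of_ord (tag x)).
Proof. by rewrite nth_cat ltn_ord. Qed.
Arguments ltL2 {v} w x.
Definition liftL v w (x : Pt v) : Pt (v ++ w) := mkPt (ltL w x) (ltL2 w x).

Arguments liftL {v} w x.
Lemma ltR v w (x : Pt w) : size v + nat_of_ord (tag x) < size (v ++ w).
Proof. rewrite size_cat; have := ltn_ord (tag x); lia. Qed.
Arguments ltR v {w} x.
Lemma ltR2 v w (x : Pt w) : nat_of_ord (tagged x) < nth 0 (v ++ w) (size v + nat_of_ord (tag x)).
Proof. rewrite nth_cat ifN; last by rewrite -leqNgt leq_addr. by rewrite addKn. Qed.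
Arguments ltR2 v {w} x.
Definition liftR v w (x : Pt w) : Pt (v ++ w) := mkPt (ltR v x) (ltR2 v x).

Arguments liftR v {w} x.
Lemma codeL v w x : code (liftL w x) = @code v x. Proof. by []. Qed.
Lemma codeR v w x : code (liftR v x) = (size v + (@code w x).1, (code x).2). Proof. by []. Qed.

Lemma liftL_inj v w : injective (@liftL v w).
Proof. by move=> x y /(congr1 (@code _)); rewrite !codeL => /code_inj. Qed.
Lemma liftR_inj v w : injective (@liftR v w).
Proof. move=> x y /(congr1 (@code _)); rewrite !codeR /code /= => -[e1 e2].
apply: code_inj; rewrite /code; congr pair => //. exact: (addnI e1). Qed.
Lemma liftLR v w x y : @liftL v w x != liftR v y.
Proof. apply/eqP => /(congr1 (@code _)); rewrite codeL codeR => -[e _].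
have := ltn_ord (tag x); rewrite e. by rewrite ltnNge leq_addr. Qed.

Arguments liftLR {v w} x y.
Lemma splitPt v w (x : Pt (v ++ w)) :
  (exists x', x = liftL w x') \/ (exists y', x = liftR v y').
Proof.
have h1 := code1lt x; have h2 := code2lt x.
case: (ltnP (code x).1 (size v)) => H.
  left. have Hj : (code x).2 < nth 0 v (Ordinal H) by move: h2; rewrite nth_cat H.
  exists (mkPt H Hj); apply: code_inj; by [].
right. have Hi : (code x).1 - size v < size w by move: h1; rewrite size_cat; lia.
have nH : ((code x).1 < size v) = false by rewrite ltnNge H.
have Hj : (code x).2 < nth 0 w (Ordinal Hi) by move: h2; rewrite nth_cat nH.
exists (mkPt Hi Hj); apply: code_inj; rewrite codeR.
have -> : code (mkPt Hi Hj) = ((code x).1 - size v, (code x).2) by [].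
by rewrite /= subnKC // -surjective_pairing.
Qed.

Definition wL (v w : seq nat) (i : 'I_(size v)) : 'I_(size (v ++ w)) :=
  Ordinal (n := size (v ++ w)) (m := nat_of_ord i) (ltac:(rewrite size_cat; have := ltn_ord i; lia)).
Definition wR (v w : seq nat) (i : 'I_(size w)) : 'I_(size (v ++ w)) :=
  Ordinal (n := size (v ++ w)) (m := size v + nat_of_ord i) (ltac:(rewrite size_cat; have := ltn_ord i; lia)).

Arguments wL {v} w i.
Arguments wR v {w} i.
Lemma splitIdx v w (i : 'I_(size (v ++ w))) :
  (exists i', i = wL w i') \/ (exists i', i = wR v i').
Proof.
have h1 : nat_of_ord i < size v + size w by rewrite -size_cat ltn_ord.
case: (ltnP i (size v)) => H.
  by left; exists (Ordinal H); apply: val_inj.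
right. have Hi : nat_of_ord i - size v < size w by lia.
exists (Ordinal Hi); apply: val_inj => /=; lia.
Qed.

Arguments splitPt {v w} x.
Arguments splitIdx {v w} i.
Lemma tagLL v w x i : (tag (liftL w x) == wL w i) = (tag x == i :> 'I_(size v)).
Proof. by []. Qed.
Lemma tagLR v w x i : (tag (liftL w x) == wR v i) = false.
Proof. apply/negbTE/eqP => /(congr1 val) /= e. have := ltn_ord (tag x). rewrite e. by rewrite ltnNge leq_addr. Qed.
Lemma tagRL v w x i : (tag (liftR v x) == wL w i) = false.
Proof. apply/negbTE/eqP => /(congr1 val) /= e. have := ltn_ord i. rewrite -e. by rewrite ltnNge leq_addr. Qed.
Lemma tagRR v w x i : (tag (liftR v x) == wR v i) = (tag x == i :> 'I_(size w)).
Proof. by rewrite -!val_eqE /= eqn_add2l. Qed.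

Definition LS v w (S : {set Pt v}) : {set Pt (v ++ w)} := liftL w @: S.
Definition RS v w (S : {set Pt w}) : {set Pt (v ++ w)} := liftR v @: S.

Arguments LS {v} w S.
Arguments RS v {w} S.
Lemma inLL v w (S : {set Pt v}) x : (liftL w x \in LS w S) = (x \in S).
Proof. by rewrite mem_imset //; apply: liftL_inj. Qed.
Lemma inRR v w (S : {set Pt w}) x : (liftR v x \in RS v S) = (x \in S).
Proof. by rewrite mem_imset //; apply: liftR_inj. Qed.
Lemma inRL v w (S : {set Pt v}) x : (liftR v x \in LS w S) = false.
Proof. apply/negbTE/imsetP => -[y _ e]. by have := liftLR y x; rewrite e eqxx. Qed.
Lemma inLR v w (S : {set Pt w}) x : (liftL w x \in RS v S) = false.
Proof. apply/negbTE/imsetP => -[y _ e]. by have := liftLR x y; rewrite e eqxx. Qed.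

Lemma partU a i A B : part a i (A :|: B) = part a i A :|: part a i B.
Proof. by apply/setP => x; rewrite !inE andb_orl. Qed.

Lemma partLL v w i (S : {set Pt v}) : part (v ++ w) (wL w i) (LS w S) = LS w (part v i S).
Proof. apply/setP => x; case: (splitPt x) => -[y ->];
 by rewrite inpart ?inLL ?inRL ?tagLL ?tagRL ?inpart. Qed.
Lemma partRR v w i (S : {set Pt w}) : part (v ++ w) (wR v i) (RS v S) = RS v (part w i S).
Proof. apply/setP => x; case: (splitPt x) => -[y ->];
 by rewrite inpart ?inLR ?inRR ?tagRR ?tagLR ?inpart. Qed.
Lemma partLR v w i (S : {set Pt v}) : part (v ++ w) (wR v i) (LS w S) = set0.
Proof. apply/setP => x; case: (splitPt x) => -[y ->];
 by rewrite inpart ?inLL ?inRL ?tagLR ?andbF ?inE. Qed.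
Lemma partRL v w i (S : {set Pt w}) : part (v ++ w) (wL w i) (RS v S) = set0.
Proof. apply/setP => x; case: (splitPt x) => -[y ->];
 by rewrite inpart ?inLR ?inRR ?tagRL ?andbF ?inE. Qed.

Lemma cardLS v w (S : {set Pt v}) : #|LS w S| = #|S|.
Proof. by rewrite card_imset //; apply: liftL_inj. Qed.
Lemma cardRS v w (S : {set Pt w}) : #|RS v S| = #|S|.
Proof. by rewrite card_imset //; apply: liftR_inj. Qed.

Lemma block_cat v w k l (B1 : {set Pt v}) (B2 : {set Pt w}) :
  size k = size v -> size l = size w ->
  is_block v k B1 -> is_block w l B2 -> is_block (v ++ w) (k ++ l) (LS w B1 :|: RS v B2).
Proof.
move=> sk sl /forallP h1 /forallP h2; apply/forallP => i.
case: (splitIdx i) => -[i' ->].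
- rewrite partU partLL partRL setU0 cardLS nth_cat /= sk ltn_ord. exact: h1.
- rewrite partU partLR partRR set0U cardRS nth_cat /= sk ifN ?addKn; first exact: h2.
  by rewrite -leqNgt leq_addr.
Qed.

Lemma adm_L v w k l (T : {set Pt v}) : size k = size v ->
  admissible (v ++ w) (k ++ l) (LS w T) -> admissible v k T.
Proof.
move=> sk /andP[/forallP h c]. apply/andP; split; last by move: c; rewrite cardLS.
apply/forallP => i. have := h (wL w i). by rewrite partLL cardLS nth_cat /= sk ltn_ord.
Qed.

Lemma adm_R v w k l (T : {set Pt w}) : size k = size v ->
  admissible (v ++ w) (k ++ l) (RS v T) -> admissible w l T.
Proof.
move=> sk /andP[/forallP h c]. apply/andP; split; last by move: c; rewrite cardRS.
apply/forallP => i. have := h (wR v i). rewrite partRR cardRS nth_cat /= sk ifN ?addKn //.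
by rewrite -leqNgt leq_addr.
Qed.

Lemma extend (T : finType) (c : nat) (X U : {set T}) : X \subset U -> #|X| <= c -> c <= #|U| ->
  exists Y : {set T}, [/\ X \subset Y, Y \subset U & #|Y| == c].
Proof.
move=> XU; move Hd : (c - #|X|) => d; elim: d X XU Hd => [|d IH] X XU Hd Xc cU.
  by exists X; split => //; apply/eqP; lia.
have : ~~ (U \subset X).
  by apply/negP => UX; have := subset_leq_card UX; lia.
case/subsetPn => u uU uX.
have s1 : u |: X \subset U by rewrite subUset sub1set uU XU.
have s2 : c - #|u |: X| = d by rewrite cardsU1 uX; lia.
have s3 : #|u |: X| <= c by rewrite cardsU1 uX; lia.
have [Y [h1 h2 h3]] := IH (u |: X) s1 s2 s3 cU.
exists Y; split => //. apply: subset_trans h1. exact: subsetUr.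
Qed.

Definition fib a i := part a i [set x : Pt a | true].
Lemma card_fib a i : #|fib a i| = nth 0 a i.
Proof.
have := card_part_fun a (fun _ _ => true) i. rewrite /fib => ->.
rewrite -[RHS](size_iota 0 (nth 0 a i)). by elim: (iota 0 _) => //= ? ? ->.
Qed.

Lemma exists_block a b (T : {set Pt a}) : size b = size a ->
  (forall i, i < size a -> nth 0 b i <= nth 0 a i) ->
  (forall i, #|part a i T| <= nth 0 b i) -> exists2 B, is_block a b B & T \subset B.
Proof.
move=> sb hba hT.
pose Y i := odflt set0 [pick Y : {set Pt a} | [&& part a i T \subset Y, Y \subset fib a i & #|Y| == nth 0 b i]].
have HY : forall i, [/\ part a i T \subset Y i, Y i \subset fib a i & #|Y i| == nth 0 b i].
  move=> i; rewrite /Y; case: pickP => [Z /and3P[h1 h2 h3] //|none].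
  have [|||Z [h1 h2 h3]] := @extend _ (nth 0 b i) (part a i T) (fib a i).
  - by apply/subsetP => x; rewrite !inE => /andP[_ ->].
  - exact: hT.
  - by rewrite card_fib hba.
  - by have := none Z; rewrite h1 h2 h3.
exists [set x | x \in Y (tag x)].
- apply/forallP => i. have [h1 h2 h3] := HY i.
  have -> : part a i [set x | x \in Y (tag x)] = Y i.
    apply/setP => x; rewrite !inE. apply/andP/idP => [[H /eqP e]|H]; first by rewrite -e.
    have := subsetP h2 x H; rewrite !inE /= => /eqP e. by rewrite e H.
  exact: h3.
- apply/subsetP => x xT. rewrite inE. have [h1 _ _] := HY (tag x). apply: (subsetP h1).
  by rewrite !inE xT eqxx.
Qed.

Lemma exists_GC a b : size b = size a -> (forall i, i < size a -> nth 0 b i <= nth 0 a i) ->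
  exists F, is_GC a b F.
Proof.
move=> sb hba. exists (enum [set B | is_block a b B]).
apply/andP; split.
  by apply/allP => B; rewrite mem_enum inE.
apply/forallP => T; apply/implyP => /andP[/forallP hT _].
have [B hB TB] := @exists_block _ _ _ sb hba hT.
by apply/hasP; exists B => //; rewrite mem_enum inE.
Qed.

Lemma hasGCbP a b n : hasGCb a b n = true <-> has_GC_of_size a b n.
Proof. by rewrite /hasGCb; case: excluded_middle_informative. Qed.

Lemma C2_spec a b : (exists F, is_GC a b F) ->
  (exists F, size F = C2 a b /\ is_GC a b F) /\ (forall F, is_GC a b F -> C2 a b <= size F).
Proof.
move=> [F0 hF0].
have ex : exists n, hasGCb a b n by exists (size F0); apply/hasGCbP; exists F0.
rewrite /C2; case: excluded_middle_informative => [P|nP]; last by case: (nP ex).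
case: ex_minnP => n /hasGCbP [F [sF hF]] hmin. split; first by exists F.
move=> F' hF'. apply: hmin. apply/hasGCbP. by exists F'.
Qed.

Definition win V K s j := (minn (s * K) (V - K) <= j) && (j < minn (s * K) (V - K) + K).
Definition Win a b s : {set Pt a} :=
  [set x : Pt a | win (nth 0 a (tag x)) (nth 0 b (tag x)) s (tagged x)].

Lemma count_int st K V : st + K <= V ->
  count (fun j => (st <= j) && (j < st + K)) (iota 0 V) = K.
Proof.
move=> h. have -> : V = st + (K + (V - (st + K))) by lia.
rewrite !iotaD !count_cat.
rewrite (@eq_in_count _ _ pred0) ?count_pred0; last first.
  by move=> j; rewrite mem_iota => /andP[_ hj] /=; apply/negP => /andP[]; lia.
rewrite (@eq_in_count _ _ pred0 (iota (0 + st + K) _)) ?count_pred0; last first.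
  by move=> j; rewrite mem_iota => /andP[hj _] /=; apply/negP => /andP[]; lia.
rewrite (@eq_in_count _ _ predT) ?count_predT ?size_iota ?add0n ?addn0 //.
by move=> j; rewrite mem_iota => /andP[h1 h2] /=; apply/andP; split; lia.
Qed.

Lemma Win_block a b s : (forall i, i < size a -> nth 0 b i <= nth 0 a i) -> is_block a b (Win a b s).
Proof.
move=> hba; apply/forallP => i.
have := card_part_fun a (fun i j => win (nth 0 a i) (nth 0 b i) s j) i.
rewrite /Win => ->. rewrite count_int //. have := hba i (ltn_ord i). lia.
Qed.

Lemma win_cover V K j : 0 < K -> K <= V -> j < V -> win V K (j %/ K) j.
Proof.
move=> K0 KV jV. rewrite /win. have := divn_eq j K; have := ltn_pmod j K0.
set qk := j %/ K * K. set r := j %% K. move=> *. apply/andP; split; lia.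
Qed.

Lemma ceil_bound j K V : 0 < K -> j < V -> j %/ K < ceildiv V K.
Proof.
move=> K0 jV. rewrite /ceildiv ltn_divLR //. have := divn_eq (V+K).-1 K.
have := ltn_pmod (V+K).-1 K0. set qk := _ %/ _ * _. lia.
Qed.

Lemma Win_cover a b (x : Pt a) : all (fun x => 0 < x) b -> size b = size a ->
  (forall i, i < size a -> nth 0 b i <= nth 0 a i) ->
  exists2 s, s < \max_(i < size a) ceildiv (nth 0 a i) (nth 0 b i) & x \in Win a b s.
Proof.
move=> pb sb hba.
have K0 : 0 < nth 0 b (tag x).
  by have := allP pb (nth 0 b (tag x)) (mem_nth 0 (_ : (tag x : nat) < size b)); apply; rewrite sb ltn_ord.
exists ((tagged x) %/ nth 0 b (tag x)).
  apply: (leq_trans _ (leq_bigmax (tag x))). apply: ceil_bound => //.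
rewrite inE; apply: win_cover => //. exact: hba.
Qed.
Arguments exists_GC {a b}.
Arguments Win_cover {a b} x.
Arguments adm_L {v w k l T}.
Arguments adm_R {v w k l T}.
Arguments C2_spec {a b}.

Lemma nth_block a b (F : seq {set Pt a}) D j :
  all (is_block a b) F -> is_block a b D -> is_block a b (nth D F j).
Proof.
move=> hF hD; case: (ltnP j (size F)) => h; first exact: (allP hF) _ (mem_nth D h).
by rewrite nth_default.
Qed.

Theorem corollary6p4 (m n : nat) (v k w l : seq nat) :
  size v = m -> size k = m -> size w = n -> size l = n ->
  all (fun x => 0 < x) v -> all (fun x => 0 < x) k ->
  all (fun x => 0 < x) w -> all (fun x => 0 < x) l ->
  (forall i, i < m -> nth 0 k i <= nth 0 v i) ->
  (forall i, i < n -> nth 0 l i <= nth 0 w i) ->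
  2 <= sumn k -> 2 <= sumn l ->
  C2 (v ++ w) (k ++ l) <=
    maxn (C2 v k) (C2 w l)
    + (\max_(i < m) ceildiv (nth 0 v i) (nth 0 k i))
      * (\max_(i < n) ceildiv (nth 0 w i) (nth 0 l i)).
Proof.
move=> sv sk sw sl _ pk _ pl hv hw _ _. subst m n.
have [[F1 [s1 g1]] _] := C2_spec (exists_GC sk hv).
have [[F2 [s2 g2]] _] := C2_spec (exists_GC sl hw).
set p := \max_(i < size v) _. set q := \max_(i < size w) _.
pose D1 := Win v k 0. pose D2 := Win w l 0.
pose M := maxn (size F1) (size F2).
pose F := [seq LS w (nth D1 F1 j) :|: RS v (nth D2 F2 j) | j <- iota 0 M] ++
          [seq LS w (Win v k s) :|: RS v (Win w l t) | s <- iota 0 p, t <- iota 0 q].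
have szF : size F = M + p * q by rewrite size_cat size_map size_iota size_allpairs !size_iota.
case/andP: (g1) => g1a /forallP g1b. case/andP: (g2) => g2a /forallP g2b.
have mixed : forall x' y', has (fun B : {set Pt (v ++ w)} => [set liftL w x'; liftR v y'] \subset B) F.
  move=> x' y'.
  have [s hs xs] := Win_cover x' pk sk hv.
  have [t ht yt] := Win_cover y' pl sl hw.
  apply/hasP; exists (LS w (Win v k s) :|: RS v (Win w l t)).
    rewrite mem_cat; apply/orP; right; apply/allpairsP; exists (s, t).
    by rewrite !mem_iota /=.
  by rewrite subUset !sub1set !in_setU inLL inRR xs yt orbT.
have gF : is_GC (v ++ w) (k ++ l) F.
  apply/andP; split.
    apply/allP => B; rewrite mem_cat => /orP[/mapP[j _ ->]|/allpairsP[[s t] [_ _ ->]]];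
      apply: block_cat => //; try apply: nth_block => //; exact: Win_block.
  apply/forallP => T; apply/implyP => hT. have hT' := hT.
  case/andP: hT => _ /cards2P [x [y [xy eT]]]. rewrite eT in hT' *.
  case: (splitPt x) => -[x' ?]; case: (splitPt y) => -[y' ?]; subst x y.
  - have eT1 : [set liftL w x'; liftL w y'] = LS w [set x'; y'] by rewrite /LS imsetU1 imset_set1.
    rewrite eT1 in hT' *. have aT := adm_L sk hT'.
    have /hasP [B BF1 TB] := implyP (g1b [set x'; y']) aT.
    apply/hasP; exists (LS w (nth D1 F1 (index B F1)) :|: RS v (nth D2 F2 (index B F1))).
      rewrite mem_cat; apply/orP; left; apply/mapP; exists (index B F1) => //.
      rewrite mem_iota /= add0n. apply: (leq_trans _ (leq_maxl _ _)). by rewrite index_mem.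
    rewrite nth_index //. apply: subset_trans (subsetUl _ _). exact: imsetS.
  - exact: mixed.
  - by rewrite setUC; apply: mixed.
  - have eT1 : [set liftR v x'; liftR v y'] = RS v [set x'; y'] by rewrite /RS imsetU1 imset_set1.
    rewrite eT1 in hT' *. have aT := adm_R sk hT'.
    have /hasP [B BF2 TB] := implyP (g2b [set x'; y']) aT.
    apply/hasP; exists (LS w (nth D1 F1 (index B F2)) :|: RS v (nth D2 F2 (index B F2))).
      rewrite mem_cat; apply/orP; left; apply/mapP; exists (index B F2) => //.
      rewrite mem_iota /= add0n. apply: (leq_trans _ (leq_maxr _ _)). by rewrite index_mem.
    rewrite nth_index //. apply: subset_trans (subsetUr _ _). exact: imsetS.
have := (C2_spec (ex_intro _ F gF)).2 F gF.
by rewrite szF /M s1 s2.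
Qed.
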